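(* Let $v\in\mathbb{R}$ and consider the system of ODEs for $(a,r,s)(\xi)\in\mathbb{R}^3$: $$\partial_\xi a=r,\qquad \partial_\xi r=-vr-\frac{sa}{2}+\frac{a|r|}{2},\qquad \partial_\xi s=-vs-ra.$$ Then each of the sets $I_1=\{r>0,\ s=2r\}$, $I_2=\{r>0,\ s=-r\}$, $I_3=\{r<0,\ s=r\}$, $I_4=\{r<0,\ s=-2r\}$ is invariant under the flow of this system, and so is each of the regions $R_1=\{s\ge-2r,\ s\ge 2r\}$, $R_2=\{s\le 2r,\ s\ge -r\}$, $R_3=\{s\le -r,\ s\le r\}$, $R_4=\{s\ge r,\ s\le-2r\}$.
   Context: Invariant means: any solution passing through a point of the set stays in the set for all $\xi$ in its interval of existence. The right-hand side of the system is locally Lipschitz, so solutions exist and are unique. *)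

(* Defs.v *)
From Stdlib Require Import Reals.
From Coquelicot Require Import Coquelicot.
Open Scope R_scope.

Definition in_interval (lo hi : Rbar) (x : R) : Prop :=
  Rbar_lt lo x /\ Rbar_lt x hi.

Definition is_solution (v : R) (lo hi : Rbar) (a r s : R -> R) : Prop :=
  forall x, in_interval lo hi x ->
    is_derive a x (r x) /\
    is_derive r x (- v * r x - s x * a x / 2 + a x * Rabs (r x) / 2) /\
    is_derive s x (- v * s x - r x * a x).

Definition invariant (v : R) (S : R -> R -> R -> Prop) : Prop :=
  forall (lo hi : Rbar) (a r s : R -> R),
    is_solution v lo hi a r s ->
    forall x0, in_interval lo hi x0 -> S (a x0) (r x0) (s x0) ->
    forall x, in_interval lo hi x -> S (a x) (r x) (s x).

Definition Iset1 (a r s : R) : Prop := r > 0 /\ s = 2 * r.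
Definition Iset2 (a r s : R) : Prop := r > 0 /\ s = - r.
Definition Iset3 (a r s : R) : Prop := r < 0 /\ s = r.
Definition Iset4 (a r s : R) : Prop := r < 0 /\ s = - 2 * r.

Definition Rreg1 (a r s : R) : Prop := s >= - 2 * r /\ s >= 2 * r.
Definition Rreg2 (a r s : R) : Prop := s <= 2 * r /\ s >= - r.
Definition Rreg3 (a r s : R) : Prop := s <= - r /\ s <= r.
Definition Rreg4 (a r s : R) : Prop := s >= r /\ s <= - 2 * r.

(* Main.v *)
Require Import Defs.
From Stdlib Require Import Reals Lra Psatz.
From Coquelicot Require Import Coquelicot.
Open Scope R_scope.


Lemma d_eq (f : R -> R) (x l l' : R) : is_derive f x l -> l = l' -> is_derive f x l'.
Proof. intros H ->; exact H. Qed.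

Lemma d_mul (f g : R -> R) (x df dg : R) : is_derive f x df -> is_derive g x dg ->
  is_derive (fun t => f t * g t) x (df * g x + f x * dg).
Proof. intros H1 H2. exact (is_derive_mult f g x df dg H1 H2 Rmult_comm). Qed.

Lemma d_add (f g : R -> R) (x df dg : R) : is_derive f x df -> is_derive g x dg ->
  is_derive (fun t => f t + g t) x (df + dg).
Proof. intros H1 H2. exact (is_derive_plus f g x df dg H1 H2). Qed.

Lemma d_sub (f g : R -> R) (x df dg : R) : is_derive f x df -> is_derive g x dg ->
  is_derive (fun t => f t - g t) x (df - dg).
Proof. intros H1 H2. exact (is_derive_minus f g x df dg H1 H2). Qed.

Lemma d_opp (f : R -> R) (x df : R) : is_derive f x df -> is_derive (fun t => - f t) x (- df).
Proof. intros H1. exact (is_derive_opp f x df H1). Qed.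

Definition g (y : R) : R := Rmin y 0 * Rmin y 0.

Lemma g_key y h : 0 <= g (y + h) - g y - 2 * Rmin y 0 * h <= h * h.
Proof. unfold g, Rmin. destruct (Rle_dec (y+h) 0); destruct (Rle_dec y 0); split; nra. Qed.

Lemma g_derive y : is_derive g y (2 * Rmin y 0).
Proof.
  apply is_derive_Reals. intros eps Heps. exists (mkposreal eps Heps).
  intros h Hh0 Hh. simpl in Hh.
  pose proof (g_key y h) as [K1 K2].
  replace ((g (y + h) - g y) / h - 2 * Rmin y 0) with ((g (y + h) - g y - 2 * Rmin y 0 * h) / h) by (field; auto).
  unfold Rdiv. rewrite Rabs_mult, Rabs_inv.
  rewrite (Rabs_pos_eq (g (y + h) - g y - 2 * Rmin y 0 * h)) by lra.
  assert (Ha : 0 < Rabs h) by (apply Rabs_pos_lt; auto).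
  apply Rle_lt_trans with (Rabs h); [|exact Hh].
  apply Rmult_le_reg_r with (Rabs h); auto.
  rewrite Rmult_assoc, Rinv_l by lra. rewrite Rmult_1_r.
  replace (Rabs h * Rabs h) with (h*h). lra.
  rewrite <- Rabs_mult. rewrite Rabs_pos_eq; nra.
Qed.

Lemma d_g (f : R -> R) (x df : R) : is_derive f x df -> is_derive (fun t => g (f t)) x (df * (2 * Rmin (f x) 0)).
Proof. intros H. exact (is_derive_comp g f x _ _ (g_derive (f x)) H). Qed.

Lemma g_nonneg y : 0 <= g y.
Proof. unfold g; nra. Qed.

Lemma derive_cont (f : R -> R) (x l : R) : is_derive f x l -> continuity_pt f x.
Proof. intros H. apply continuity_pt_filterlim. apply (ex_derive_continuous (K:=R_AbsRing) (V:=R_NormedModule) f x). exists l; exact H. Qed.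

Lemma gronwall (E dE : R -> R) (K c d x0 : R) :
  c <= x0 <= d -> (forall t, c <= t <= d -> is_derive E t (dE t)) ->
  (forall t, c <= t <= d -> 0 <= E t) ->
  (forall t, c <= t <= d -> Rabs (dE t) <= K * E t) -> E x0 = 0 ->
  forall t, c <= t <= d -> E t = 0.
Proof.
  intros Hx0 HD Hpos Hb H0 t Ht.
  destruct (Rle_or_lt x0 t) as [Hle|Hlt].
  - set (F := fun u => E u * exp (- K * (u - x0))).
    set (dF := fun u => dE u * exp (- K * (u - x0)) + E u * (- K * exp (- K * (u - x0)))).
    destruct (MVT_gen F x0 t dF) as [c0 [Hc0 Hm]].
    + intros y Hy. rewrite Rmin_left in Hy by lra. rewrite Rmax_right in Hy by lra.
      unfold F, dF. apply (d_mul E (fun u => exp (- K * (u - x0)))). apply HD; lra. auto_derive; [auto | unfold Rminus; ring].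
    + intros y Hy. rewrite Rmin_left in Hy by lra. rewrite Rmax_right in Hy by lra.
      apply (derive_cont F y (dF y)). unfold F, dF. apply (d_mul E (fun u => exp (- K * (u - x0)))). apply HD; lra. auto_derive; [auto | unfold Rminus; ring].
    + rewrite Rmin_left in Hc0 by lra. rewrite Rmax_right in Hc0 by lra.
      assert (Hd : dF c0 <= 0).
      { unfold dF. pose proof (Hb c0 ltac:(lra)). pose proof (Rle_abs (dE c0)).
        pose proof (exp_pos (- K * (c0 - x0))). nra. }
      unfold F in Hm. rewrite H0 in Hm.
      pose proof (exp_pos (- K * (t - x0))). pose proof (Hpos t Ht). nra.
  - set (F := fun u => E u * exp (K * (u - x0))).
    set (dF := fun u => dE u * exp (K * (u - x0)) + E u * (K * exp (K * (u - x0)))).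
    destruct (MVT_gen F t x0 dF) as [c0 [Hc0 Hm]].
    + intros y Hy. rewrite Rmin_left in Hy by lra. rewrite Rmax_right in Hy by lra.
      unfold F, dF. apply (d_mul E (fun u => exp (K * (u - x0)))). apply HD; lra. auto_derive; [auto | unfold Rminus; ring].
    + intros y Hy. rewrite Rmin_left in Hy by lra. rewrite Rmax_right in Hy by lra.
      apply (derive_cont F y (dF y)). unfold F, dF. apply (d_mul E (fun u => exp (K * (u - x0)))). apply HD; lra. auto_derive; [auto | unfold Rminus; ring].
    + rewrite Rmin_left in Hc0 by lra. rewrite Rmax_right in Hc0 by lra.
      assert (Hd : 0 <= dF c0).
      { unfold dF. pose proof (Hb c0 ltac:(lra)). pose proof (Rle_abs (- dE c0)).
        rewrite Rabs_Ropp in H1.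
        pose proof (exp_pos (K * (c0 - x0))). nra. }
      unfold F in Hm. rewrite H0 in Hm.
      pose proof (exp_pos (K * (t - x0))). pose proof (Hpos t Ht). nra.
Qed.


Lemma seg_in lo hi x0 x t : in_interval lo hi x0 -> in_interval lo hi x ->
  Rmin x0 x <= t <= Rmax x0 x -> in_interval lo hi t.
Proof.
  unfold in_interval, Rmin, Rmax. intros [H1 H2] [H3 H4] Ht.
  destruct (Rle_dec x0 x);
  destruct lo as [l| |]; destruct hi as [h| |]; simpl in *; intuition lra.
Qed.

Lemma zero_prop lo hi (a E dE : R -> R) C1 C2 :
  (forall t, in_interval lo hi t -> continuity_pt a t) -> 0 <= C1 -> 0 <= C2 ->
  (forall t, in_interval lo hi t -> is_derive E t (dE t)) ->
  (forall t, in_interval lo hi t -> 0 <= E t) ->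
  (forall t, in_interval lo hi t -> Rabs (dE t) <= (C1 + C2 * Rabs (a t)) * E t) ->
  forall x0, in_interval lo hi x0 -> E x0 = 0 -> forall x, in_interval lo hi x -> E x = 0.
Proof.
  intros Ha HC1 HC2 HD Hp Hb x0 Hx0 H0 x Hx.
  assert (Hs : forall t, Rmin x0 x <= t <= Rmax x0 x -> in_interval lo hi t) by (intros t; apply seg_in; auto).
  assert (Hcd : Rmin x0 x <= Rmax x0 x) by (unfold Rmin, Rmax; destruct Rle_dec; lra).
  destruct (continuity_ab_maj (fun t => Rabs (a t)) (Rmin x0 x) (Rmax x0 x) Hcd) as [M [HM HMr]].
  { intros c Hc. apply continuity_pt_comp with (f2 := Rabs). apply Ha, Hs, Hc.
    apply Rcontinuity_abs. }
  apply (gronwall E dE (C1 + C2 * Rabs (a M)) (Rmin x0 x) (Rmax x0 x) x0).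
  - unfold Rmin, Rmax; destruct Rle_dec; lra.
  - intros t Ht; apply HD, Hs, Ht.
  - intros t Ht; apply Hp, Hs, Ht.
  - intros t Ht. eapply Rle_trans. apply Hb, Hs, Ht.
    apply Rmult_le_compat_r. apply Hp, Hs, Ht.
    pose proof (HM t Ht). simpl in H. nra.
  - exact H0.
  - unfold Rmin, Rmax; destruct Rle_dec; lra.
Qed.

Lemma bnd (v A E Q c Z : R) : 0 <= E -> Rabs c <= 2 -> Rabs Q <= 6 * E ->
  Z = c * v * E + A * Q -> Rabs Z <= (2 * Rabs v + 6 * Rabs A) * E.
Proof.
  intros HE Hc HQ ->. eapply Rle_trans. apply Rabs_triang.
  rewrite !Rabs_mult. rewrite (Rabs_pos_eq E HE).
  pose proof (Rabs_pos v). pose proof (Rabs_pos A). pose proof (Rabs_pos c).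
  assert (Rabs c * Rabs v <= 2 * Rabs v) by nra.
  assert (Rabs c * Rabs v * E <= 2 * Rabs v * E) by (apply Rmult_le_compat_r; auto).
  assert (Rabs A * Rabs Q <= Rabs A * (6 * E)) by (apply Rmult_le_compat_l; auto).
  nra.
Qed.


Ltac cnra := repeat match goal with H := _ |- _ => clearbody H end; nra.

Ltac hints2 X Y := pose proof (Rle_0_sqr X); pose proof (Rle_0_sqr Y); pose proof (Rle_0_sqr (X+Y));
  pose proof (Rle_0_sqr (X-Y)); unfold Rsqr in *.

Lemma abs_c (c : R) : -2 <= c <= 2 -> Rabs c <= 2.
Proof. intros; apply Rabs_le; lra. Qed.

Lemma sol_cont v lo hi a r s : is_solution v lo hi a r s ->
  forall t, in_interval lo hi t -> continuity_pt a t.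
Proof. intros Hsol t Ht. eapply derive_cont. apply (Hsol t Ht). Qed.

Lemma inv_I1 v : invariant v Iset1.
Proof.
  intros lo hi a r s Hsol x0 Hx0 [Hr0 Hs0] x Hx.
  pose proof (sol_cont _ _ _ _ _ _ Hsol) as Ha.
  set (dr := fun t => - v * r t - s t * a t / 2 + a t * Rabs (r t) / 2).
  set (ds := fun t => - v * s t - r t * a t).
  set (E := fun t => (s t - 2 * r t) * (s t - 2 * r t) + g (r t)).
  set (dE := fun t => (ds t - 2 * dr t) * (s t - 2 * r t) + (s t - 2 * r t) * (ds t - 2 * dr t) + dr t * (2 * Rmin (r t) 0)).
  assert (HE : forall t, in_interval lo hi t -> E t = 0).
  { intros t0 Ht0. refine (zero_prop lo hi a E dE (2 * Rabs v) 6 Ha _ _ _ _ _ x0 Hx0 _ t0 Ht0).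
    - pose proof (Rabs_pos v); lra.
    - lra.
    - intros t Ht. destruct (Hsol t Ht) as [_ [Hr Hs]]. unfold E, dE.
      apply (d_add (fun u => (s u - 2 * r u) * (s u - 2 * r u)) (fun u => g (r u))).
      + apply (d_mul (fun u => s u - 2 * r u) (fun u => s u - 2 * r u));
        apply (d_sub s (fun u => 2 * r u)); [exact Hs | apply is_derive_scal; exact Hr
                                             | exact Hs | apply is_derive_scal; exact Hr].
      + apply d_g. exact Hr.
    - intros t Ht. unfold E. pose proof (g_nonneg (r t)). pose proof (Rle_0_sqr (s t - 2 * r t)); unfold Rsqr in *; cnra.
    - intros t Ht. unfold E, dE, dr, ds, g, Rmin.
      destruct (Rle_dec (r t) 0) as [Hn|Hp].
      + rewrite (Rabs_left1 (r t) Hn).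
        apply (bnd v (a t) _ (2 * (s t - 2 * r t) * (s t - 2 * r t) + 3 * (s t - 2 * r t) * r t - 3 * r t * r t) (-2)).
        * hints2 (s t - 2 * r t) (r t); cnra.
        * apply abs_c; lra.
        * pose proof (Rle_0_sqr (s t - 2 * r t - r t)); pose proof (Rle_0_sqr (s t - 2 * r t + r t));
          pose proof (Rle_0_sqr (s t - 2 * r t)); pose proof (Rle_0_sqr (r t)); unfold Rsqr in *;
          apply Rabs_le; split; cnra.
        * field.
      + rewrite (Rabs_pos_eq (r t)) by lra.
        apply (bnd v (a t) _ (2 * (s t - 2 * r t) * (s t - 2 * r t)) (-2)).
        * hints2 (s t - 2 * r t) (r t); cnra.
        * apply abs_c; lra.
        * pose proof (Rle_0_sqr (s t - 2 * r t - r t)); pose proof (Rle_0_sqr (s t - 2 * r t + r t));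
          pose proof (Rle_0_sqr (s t - 2 * r t)); pose proof (Rle_0_sqr (r t)); unfold Rsqr in *;
          apply Rabs_le; split; cnra.
        * field.
    - unfold E, g. rewrite Rmin_right by lra. rewrite Hs0. ring. }
  assert (H2 : forall t, in_interval lo hi t -> 0 <= r t /\ s t = 2 * r t).
  { intros t Ht. pose proof (HE t Ht) as H. unfold E, g in H.
    unfold Rmin in H. hints2 (s t - 2 * r t) (r t); destruct (Rle_dec (r t) 0); split; cnra. }
  assert (Hz : forall t, in_interval lo hi t -> r t = 0 -> forall y, in_interval lo hi y -> r y = 0).
  { intros t Ht Hrt.
    refine (zero_prop lo hi a r dr (2 * Rabs v) 6 Ha _ _ _ _ _ t Ht Hrt).
    - pose proof (Rabs_pos v); lra.
    - lra.
    - intros y Hy. apply (Hsol y Hy).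
    - intros y Hy. apply (H2 y Hy).
    - intros y Hy. destruct (H2 y Hy) as [Hp Hq]. unfold dr.
      rewrite (Rabs_pos_eq (r y)) by lra. rewrite Hq.
      apply (bnd v (a y) _ (- r y / 2) (-1)).
      + lra.
      + apply abs_c; lra.
      + apply Rabs_le; split; cnra.
      + field. }
  destruct (H2 x Hx) as [Hp Hq]. split; [|exact Hq].
  destruct (Req_dec (r x) 0) as [Hrx|Hrx].
  - pose proof (Hz x Hx Hrx x0 Hx0). lra.
  - lra.
Qed.

Lemma inv_I2 v : invariant v Iset2.
Proof.
  intros lo hi a r s Hsol x0 Hx0 [Hr0 Hs0] x Hx.
  pose proof (sol_cont _ _ _ _ _ _ Hsol) as Ha.
  set (dr := fun t => - v * r t - s t * a t / 2 + a t * Rabs (r t) / 2).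
  set (ds := fun t => - v * s t - r t * a t).
  set (E := fun t => (s t + r t) * (s t + r t) + g (r t)).
  set (dE := fun t => (ds t + dr t) * (s t + r t) + (s t + r t) * (ds t + dr t) + dr t * (2 * Rmin (r t) 0)).
  assert (HE : forall t, in_interval lo hi t -> E t = 0).
  { intros t0 Ht0. refine (zero_prop lo hi a E dE (2 * Rabs v) 6 Ha _ _ _ _ _ x0 Hx0 _ t0 Ht0).
    - pose proof (Rabs_pos v); lra.
    - lra.
    - intros t Ht. destruct (Hsol t Ht) as [_ [Hr Hs]]. unfold E, dE.
      apply (d_add (fun u => (s u + r u) * (s u + r u)) (fun u => g (r u))).
      + apply (d_mul (fun u => s u + r u) (fun u => s u + r u));
        apply (d_add s r); [exact Hs | exact Hr | exact Hs | exact Hr].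
      + apply d_g. exact Hr.
    - intros t Ht. unfold E. pose proof (g_nonneg (r t)). pose proof (Rle_0_sqr (s t + r t)); unfold Rsqr in *; cnra.
    - intros t Ht. unfold E, dE, dr, ds, g, Rmin.
      destruct (Rle_dec (r t) 0) as [Hn|Hp].
      + rewrite (Rabs_left1 (r t) Hn).
        apply (bnd v (a t) _ (- ((s t + r t) * (s t + r t) + 3 * (s t + r t) * r t)) (-2)).
        * hints2 (s t + r t) (r t); cnra.
        * apply abs_c; lra.
        * pose proof (Rle_0_sqr (s t + r t - r t)); pose proof (Rle_0_sqr (s t + r t + r t));
          pose proof (Rle_0_sqr (s t + r t)); pose proof (Rle_0_sqr (r t)); unfold Rsqr in *;
          apply Rabs_le; split; cnra.
        * field.
      + rewrite (Rabs_pos_eq (r t)) by lra.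
        apply (bnd v (a t) _ (- ((s t + r t) * (s t + r t))) (-2)).
        * hints2 (s t + r t) (r t); cnra.
        * apply abs_c; lra.
        * pose proof (Rle_0_sqr (s t + r t - r t)); pose proof (Rle_0_sqr (s t + r t + r t));
          pose proof (Rle_0_sqr (s t + r t)); pose proof (Rle_0_sqr (r t)); unfold Rsqr in *;
          apply Rabs_le; split; cnra.
        * field.
    - unfold E, g. rewrite Rmin_right by lra. rewrite Hs0. ring. }
  assert (H2 : forall t, in_interval lo hi t -> 0 <= r t /\ s t = - r t).
  { intros t Ht. pose proof (HE t Ht) as H. unfold E, g in H.
    unfold Rmin in H. hints2 (s t + r t) (r t); destruct (Rle_dec (r t) 0); split; cnra. }
  assert (Hz : forall t, in_interval lo hi t -> r t = 0 -> forall y, in_interval lo hi y -> r y = 0).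
  { intros t Ht Hrt.
    refine (zero_prop lo hi a r dr (2 * Rabs v) 6 Ha _ _ _ _ _ t Ht Hrt).
    - pose proof (Rabs_pos v); lra.
    - lra.
    - intros y Hy. apply (Hsol y Hy).
    - intros y Hy. apply (H2 y Hy).
    - intros y Hy. destruct (H2 y Hy) as [Hp Hq]. unfold dr.
      rewrite (Rabs_pos_eq (r y)) by lra. rewrite Hq.
      apply (bnd v (a y) _ (r y) (-1)).
      + lra.
      + apply abs_c; lra.
      + apply Rabs_le; split; cnra.
      + field. }
  destruct (H2 x Hx) as [Hp Hq]. split; [|exact Hq].
  destruct (Req_dec (r x) 0) as [Hrx|Hrx].
  - pose proof (Hz x Hx Hrx x0 Hx0). lra.
  - lra.
Qed.


Lemma inv_I3 v : invariant v Iset3.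
Proof.
  intros lo hi a r s Hsol x0 Hx0 [Hr0 Hs0] x Hx.
  pose proof (sol_cont _ _ _ _ _ _ Hsol) as Ha.
  set (dr := fun t => - v * r t - s t * a t / 2 + a t * Rabs (r t) / 2).
  set (ds := fun t => - v * s t - r t * a t).
  set (E := fun t => (s t - r t) * (s t - r t) + g (- r t)).
  set (dE := fun t => (ds t - dr t) * (s t - r t) + (s t - r t) * (ds t - dr t) + (- dr t) * (2 * Rmin (- r t) 0)).
  assert (HE : forall t, in_interval lo hi t -> E t = 0).
  { intros t0 Ht0. refine (zero_prop lo hi a E dE (2 * Rabs v) 6 Ha _ _ _ _ _ x0 Hx0 _ t0 Ht0).
    - pose proof (Rabs_pos v); lra.
    - lra.
    - intros t Ht. destruct (Hsol t Ht) as [_ [Hr Hs]]. unfold E, dE.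
      apply (d_add (fun u => (s u - r u) * (s u - r u)) (fun u => g (- r u))).
      + apply (d_mul (fun u => s u - r u) (fun u => s u - r u));
        apply (d_sub s r); [exact Hs | exact Hr | exact Hs | exact Hr].
      + apply (d_g (fun u => - r u)). apply d_opp. exact Hr.
    - intros t Ht. unfold E. pose proof (g_nonneg (- r t)).
      pose proof (Rle_0_sqr (s t - r t)); unfold Rsqr in *; cnra.
    - intros t Ht. unfold E, dE, dr, ds, g, Rmin.
      destruct (Rle_dec (- r t) 0) as [Hn|Hp].
      + rewrite (Rabs_pos_eq (r t)) by lra.
        apply (bnd v (a t) _ ((s t - r t) * (s t - r t) - 3 * (s t - r t) * r t) (-2)).
        * hints2 (s t - r t) (r t); cnra.
        * apply abs_c; lra.
        * hints2 (s t - r t) (r t);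
          apply Rabs_le; split; cnra.
        * field.
      + rewrite (Rabs_left (r t)) by lra.
        apply (bnd v (a t) _ ((s t - r t) * (s t - r t)) (-2)).
        * hints2 (s t - r t) (r t); cnra.
        * apply abs_c; lra.
        * hints2 (s t - r t) (r t);
          apply Rabs_le; split; cnra.
        * field.
    - unfold E, g. rewrite Rmin_right by lra. rewrite Hs0. ring. }
  assert (H2 : forall t, in_interval lo hi t -> 0 <= - r t /\ s t = r t).
  { intros t Ht. pose proof (HE t Ht) as H. unfold E, g in H.
    unfold Rmin in H. hints2 (s t - r t) (r t); destruct (Rle_dec (- r t) 0); split; cnra. }
  assert (Hz : forall t, in_interval lo hi t -> - r t = 0 -> forall y, in_interval lo hi y -> - r y = 0).
  { intros t Ht Hrt.
    refine (zero_prop lo hi a (fun u => - r u) (fun u => - dr u) (2 * Rabs v) 6 Ha _ _ _ _ _ t Ht Hrt).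
    - pose proof (Rabs_pos v); lra.
    - lra.
    - intros y Hy. apply d_opp. apply (Hsol y Hy).
    - intros y Hy. apply (H2 y Hy).
    - intros y Hy. destruct (H2 y Hy) as [Hp Hq]. unfold dr.
      rewrite (Rabs_left1 (r y)) by lra. rewrite Hq.
      apply (bnd v (a y) _ (r y) (-1)).
      + lra.
      + apply abs_c; lra.
      + apply Rabs_le; split; lra.
      + field. }
  destruct (H2 x Hx) as [Hp Hq]. split; [|exact Hq].
  destruct (Req_dec (- r x) 0) as [Hrx|Hrx].
  - pose proof (Hz x Hx Hrx x0 Hx0). lra.
  - lra.
Qed.


Lemma inv_I4 v : invariant v Iset4.
Proof.
  intros lo hi a r s Hsol x0 Hx0 [Hr0 Hs0] x Hx.
  pose proof (sol_cont _ _ _ _ _ _ Hsol) as Ha.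
  set (dr := fun t => - v * r t - s t * a t / 2 + a t * Rabs (r t) / 2).
  set (ds := fun t => - v * s t - r t * a t).
  set (E := fun t => (s t + 2 * r t) * (s t + 2 * r t) + g (- r t)).
  set (dE := fun t => (ds t + 2 * dr t) * (s t + 2 * r t) + (s t + 2 * r t) * (ds t + 2 * dr t) + (- dr t) * (2 * Rmin (- r t) 0)).
  assert (HE : forall t, in_interval lo hi t -> E t = 0).
  { intros t0 Ht0. refine (zero_prop lo hi a E dE (2 * Rabs v) 6 Ha _ _ _ _ _ x0 Hx0 _ t0 Ht0).
    - pose proof (Rabs_pos v); lra.
    - lra.
    - intros t Ht. destruct (Hsol t Ht) as [_ [Hr Hs]]. unfold E, dE.
      apply (d_add (fun u => (s u + 2 * r u) * (s u + 2 * r u)) (fun u => g (- r u))).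
      + apply (d_mul (fun u => s u + 2 * r u) (fun u => s u + 2 * r u));
        apply (d_add s (fun u => 2 * r u)); [exact Hs | apply is_derive_scal; exact Hr | exact Hs | apply is_derive_scal; exact Hr].
      + apply (d_g (fun u => - r u)). apply d_opp. exact Hr.
    - intros t Ht. unfold E. pose proof (g_nonneg (- r t)).
      pose proof (Rle_0_sqr (s t + 2 * r t)); unfold Rsqr in *; cnra.
    - intros t Ht. unfold E, dE, dr, ds, g, Rmin.
      destruct (Rle_dec (- r t) 0) as [Hn|Hp].
      + rewrite (Rabs_pos_eq (r t)) by lra.
        apply (bnd v (a t) _ (-2 * (s t + 2 * r t) * (s t + 2 * r t) + 3 * (s t + 2 * r t) * r t + 3 * r t * r t) (-2)).
        * hints2 (s t + 2 * r t) (r t); cnra.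
        * apply abs_c; lra.
        * hints2 (s t + 2 * r t) (r t);
          apply Rabs_le; split; cnra.
        * field.
      + rewrite (Rabs_left (r t)) by lra.
        apply (bnd v (a t) _ (-2 * (s t + 2 * r t) * (s t + 2 * r t)) (-2)).
        * hints2 (s t + 2 * r t) (r t); cnra.
        * apply abs_c; lra.
        * hints2 (s t + 2 * r t) (r t);
          apply Rabs_le; split; cnra.
        * field.
    - unfold E, g. rewrite Rmin_right by lra. rewrite Hs0. ring. }
  assert (H2 : forall t, in_interval lo hi t -> 0 <= - r t /\ s t = - 2 * r t).
  { intros t Ht. pose proof (HE t Ht) as H. unfold E, g in H.
    unfold Rmin in H. hints2 (s t + 2 * r t) (r t); destruct (Rle_dec (- r t) 0); split; cnra. }
  assert (Hz : forall t, in_interval lo hi t -> - r t = 0 -> forall y, in_interval lo hi y -> - r y = 0).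
  { intros t Ht Hrt.
    refine (zero_prop lo hi a (fun u => - r u) (fun u => - dr u) (2 * Rabs v) 6 Ha _ _ _ _ _ t Ht Hrt).
    - pose proof (Rabs_pos v); lra.
    - lra.
    - intros y Hy. apply d_opp. apply (Hsol y Hy).
    - intros y Hy. apply (H2 y Hy).
    - intros y Hy. destruct (H2 y Hy) as [Hp Hq]. unfold dr.
      rewrite (Rabs_left1 (r y)) by lra. rewrite Hq.
      apply (bnd v (a y) _ (- r y / 2) (-1)).
      + lra.
      + apply abs_c; lra.
      + apply Rabs_le; split; lra.
      + field. }
  destruct (H2 x Hx) as [Hp Hq]. split; [|exact Hq].
  destruct (Req_dec (- r x) 0) as [Hrx|Hrx].
  - pose proof (Hz x Hx Hrx x0 Hx0). lra.
  - lra.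
Qed.


Lemma min_formula p q : (p + q - Rabs (p - q)) * /2 = Rmin p q.
Proof. unfold Rmin. destruct Rle_dec.
  - rewrite Rabs_left1 by lra. field.
  - rewrite Rabs_pos_eq by lra. field. Qed.

Lemma cont_min (f k : R -> R) (x : R) : continuity_pt f x -> continuity_pt k x ->
  continuity_pt (fun t => Rmin (f t) (k t)) x.
Proof.
  intros Hf Hk. apply continuity_pt_filterlim. apply continuity_pt_filterlim in Hf.
  apply continuity_pt_filterlim in Hk.
  change (continuous f x) in Hf. change (continuous k x) in Hk.
  change (continuous (fun t => Rmin (f t) (k t)) x).
  apply (continuous_ext (fun t => (f t + k t - Rabs (f t - k t)) * /2)).
  { intros t. apply min_formula. }
  apply (continuous_mult (fun t => f t + k t - Rabs (f t - k t)) (fun _ => /2)).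
  2: apply continuous_const.
  apply (continuous_minus (fun t => f t + k t) (fun t => Rabs (f t - k t))).
  apply (continuous_plus f k); assumption.
  apply (continuous_Rabs_comp (fun t => f t - k t)).
  apply (continuous_minus f k); assumption.
Qed.

Lemma inv_Z v : invariant v (fun a r s => r = 0 /\ s = 0).
Proof.
  intros lo hi a r s Hsol x0 Hx0 [Hr0 Hs0] x Hx.
  pose proof (sol_cont _ _ _ _ _ _ Hsol) as Ha.
  set (dr := fun t => - v * r t - s t * a t / 2 + a t * Rabs (r t) / 2).
  set (ds := fun t => - v * s t - r t * a t).
  set (E := fun t => r t * r t + s t * s t).
  set (dE := fun t => dr t * r t + r t * dr t + (ds t * s t + s t * ds t)).
  assert (HE : forall t, in_interval lo hi t -> E t = 0).
  { intros t0 Ht0. refine (zero_prop lo hi a E dE (2 * Rabs v) 6 Ha _ _ _ _ _ x0 Hx0 _ t0 Ht0).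
    - pose proof (Rabs_pos v); lra.
    - lra.
    - intros t Ht. destruct (Hsol t Ht) as [_ [Hr Hs]]. unfold E, dE.
      apply (d_add (fun u => r u * r u) (fun u => s u * s u)).
      + apply (d_mul r r); assumption.
      + apply (d_mul s s); assumption.
    - intros t Ht. unfold E. hints2 (r t) (s t); cnra.
    - intros t Ht. unfold E, dE, dr, ds.
      destruct (Rle_dec (r t) 0) as [Hn|Hp].
      + rewrite (Rabs_left1 (r t) Hn).
        apply (bnd v (a t) _ (- 3 * r t * s t - r t * r t) (-2)).
        * hints2 (r t) (s t); cnra.
        * apply abs_c; lra.
        * hints2 (r t) (s t); apply Rabs_le; split; cnra.
        * field.
      + rewrite (Rabs_pos_eq (r t)) by lra.
        apply (bnd v (a t) _ (- 3 * r t * s t + r t * r t) (-2)).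
        * hints2 (r t) (s t); cnra.
        * apply abs_c; lra.
        * hints2 (r t) (s t); apply Rabs_le; split; cnra.
        * field.
    - unfold E. rewrite Hr0, Hs0. ring. }
  pose proof (HE x Hx) as H. unfold E in H. hints2 (r x) (s x). split; cnra.
Qed.

Lemma inv_or v (A B : R -> R -> R -> Prop) : invariant v A -> invariant v B ->
  invariant v (fun a r s => A a r s \/ B a r s).
Proof.
  intros HA HB lo hi a r s Hsol x0 Hx0 [H|H] x Hx.
  - left. eapply HA; eauto.
  - right. eapply HB; eauto.
Qed.

Lemma region_gen v (Sreg T : R -> R -> R -> Prop) (a1 b1 a2 b2 : R) :
  invariant v T ->
  (forall a r s, Sreg a r s <-> 0 <= Rmin (a1 * r + b1 * s) (a2 * r + b2 * s)) ->
  (forall a r s, Rmin (a1 * r + b1 * s) (a2 * r + b2 * s) = 0 -> T a r s) ->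
  (forall a r s, T a r s -> Sreg a r s) ->
  invariant v Sreg.
Proof.
  intros HT Hiff HzT HTS lo hi a r s Hsol x0 Hx0 HS x Hx.
  set (H := fun t => Rmin (a1 * r t + b1 * s t) (a2 * r t + b2 * s t)).
  assert (Hc : forall t, in_interval lo hi t -> continuity_pt H t).
  { intros t Ht. destruct (Hsol t Ht) as [_ [Hr Hs]]. unfold H.
    apply cont_min.
    - eapply derive_cont. apply (d_add (fun u => a1 * r u) (fun u => b1 * s u));
      apply is_derive_scal; eassumption.
    - eapply derive_cont. apply (d_add (fun u => a2 * r u) (fun u => b2 * s u));
      apply is_derive_scal; eassumption. }
  apply Hiff in HS. apply Hiff.
  assert (HH : forall t, H t = Rmin (a1 * r t + b1 * s t) (a2 * r t + b2 * s t)) by reflexivity.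
  rewrite <- HH in HS |- *. clearbody H.
  destruct (Rle_or_lt 0 (H x)) as [Hok|Hneg]; [exact Hok|exfalso].
  assert (Hy : exists y, in_interval lo hi y /\ H y = 0).
  { destruct (Req_dec (H x0) 0) as [H0|H0]; [exists x0; split; auto|].
    assert (Hpos : 0 < H x0) by lra.
    destruct (Rtotal_order x0 x) as [Hlt|[Heq|Hgt]].
    - destruct (Ranalysis5.IVT_interv (fun t => - H t) x0 x) as [y [Hyi Hy0]].
      + intros t Ht. apply continuity_pt_opp. apply Hc.
        apply (seg_in lo hi x0 x t Hx0 Hx). rewrite Rmin_left, Rmax_right; lra.
      + exact Hlt.
      + lra.
      + lra.
      + exists y. split. apply (seg_in lo hi x0 x y Hx0 Hx). rewrite Rmin_left, Rmax_right; lra.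
        lra.
    - subst. lra.
    - destruct (Ranalysis5.IVT_interv H x x0) as [y [Hyi Hy0]].
      + intros t Ht. apply Hc.
        apply (seg_in lo hi x0 x t Hx0 Hx). rewrite Rmin_right, Rmax_left; lra.
      + exact Hgt.
      + lra.
      + lra.
      + exists y. split. apply (seg_in lo hi x0 x y Hx0 Hx). rewrite Rmin_right, Rmax_left; lra.
        exact Hy0. }
  destruct Hy as [y [Hyi Hy0]].
  assert (HTy : T (a y) (r y) (s y)) by (apply HzT; rewrite <- HH; exact Hy0).
  pose proof (HT lo hi a r s Hsol y Hyi HTy x Hx) as HTx.
  apply HTS in HTx. apply Hiff in HTx. rewrite <- HH in HTx. lra.
Qed.


Ltac dl := repeat match goal with H: _ /\ _ |- _ => destruct H end; try split; lra.
Ltac pickT := first [left; split; lra | right; left; split; lra | right; right; split; lra].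

Ltac t_iff := let a := fresh in let r := fresh in let s := fresh in
    intros a r s; unfold Rreg1, Rreg2, Rreg3, Rreg4, Rmin; destruct Rle_dec; split; intros; dl.
Ltac t_zT := let a := fresh in let r := fresh in let s := fresh in
    intros a r s; unfold Iset1, Iset2, Iset3, Iset4, Rmin; destruct Rle_dec; intros;
    destruct (Rtotal_order r 0) as [?|[?|?]]; pickT.
Ltac t_TS := let a := fresh in let r := fresh in let s := fresh in let H := fresh in
    intros a r s [H|[H|H]]; unfold Iset1, Iset2, Iset3, Iset4, Rreg1, Rreg2, Rreg3, Rreg4 in *; dl.

Lemma inv_R1 v : invariant v Rreg1.
Proof.
  apply (region_gen v Rreg1 (fun a r s => Iset1 a r s \/ (Iset4 a r s \/ (r = 0 /\ s = 0))) 2 1 (-2) 1);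
  [ | t_iff | t_zT | t_TS ].
  apply inv_or. apply inv_I1. apply inv_or. apply inv_I4. apply inv_Z.
Qed.

Lemma inv_R2 v : invariant v Rreg2.
Proof.
  apply (region_gen v Rreg2 (fun a r s => Iset1 a r s \/ (Iset2 a r s \/ (r = 0 /\ s = 0))) 2 (-1) 1 1);
  [ | t_iff | t_zT | t_TS ].
  apply inv_or. apply inv_I1. apply inv_or. apply inv_I2. apply inv_Z.
Qed.

Lemma inv_R3 v : invariant v Rreg3.
Proof.
  apply (region_gen v Rreg3 (fun a r s => Iset2 a r s \/ (Iset3 a r s \/ (r = 0 /\ s = 0))) (-1) (-1) 1 (-1));
  [ | t_iff | t_zT | t_TS ].
  apply inv_or. apply inv_I2. apply inv_or. apply inv_I3. apply inv_Z.
Qed.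

Lemma inv_R4 v : invariant v Rreg4.
Proof.
  apply (region_gen v Rreg4 (fun a r s => Iset3 a r s \/ (Iset4 a r s \/ (r = 0 /\ s = 0))) (-1) 1 (-2) (-1));
  [ | t_iff | t_zT | t_TS ].
  apply inv_or. apply inv_I3. apply inv_or. apply inv_I4. apply inv_Z.
Qed.

Theorem proposition1 (v : R) :
  invariant v Iset1 /\ invariant v Iset2 /\ invariant v Iset3 /\ invariant v Iset4 /\
  invariant v Rreg1 /\ invariant v Rreg2 /\ invariant v Rreg3 /\ invariant v Rreg4.
Proof.
  split; [apply inv_I1|]. split; [apply inv_I2|]. split; [apply inv_I3|].
  split; [apply inv_I4|]. split; [apply inv_R1|]. split; [apply inv_R2|].
  split; [apply inv_R3|]. apply inv_R4.
Qed.
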